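(* Let $f:\mathcal{P}^n\to X$ be an onto, efficient and tops-only rule. Then $f$ is NOM if and only if at least one of the following holds: (i) there is at most one agent $i\in N$ with $V_i\neq\emptyset$ and, moreover, $SV_i=V_i$; (ii) there is $y\in X$ such that $SV_i=V_i\subseteq\{y\}$ for each $i\in N$.
   Context: $N=\{1,\dots,n\}$, $n\ge2$, agents; $X$ finite alternatives, $|X|\ge2$; $\mathcal{P}$ all strict linear orders on $X$; $t(P_i)$ the top of $P_i$. A rule $f:\mathcal{P}^n\to X$ is onto; tops-only if $f(P)=f(P')$ whenever all tops coincide; efficient if for each $P$ there is no $x\in X$ with $xP_if(P)$ for all $i$. Option set $O^f(P_i)=\{f(P_i,P_{-i}):P_{-i}\in\mathcal{P}^{n-1}\}$. $P_i'$ is a manipulation at $P_i$ if $f(P_i',P_{-i})P_if(P_i,P_{-i})$ for some $P_{-i}$; it is obvious if the $P_i$-worst element of $O^f(P_i')$ is strictly $P_i$-better than the $P_i$-worst element of $O^f(P_i)$, or the $P_i$-best element of $O^f(P_i')$ is strictly $P_i$-better than the $P_i$-best element of $O^f(P_i)$. $f$ is NOM if there are no obvious manipulations. Agent $i$ vetoes $x$ via $P_i$ if $x\notin O^f(P_i)$; $V_i$ = alternatives $i$ vetoes via some preference; $\mathcal{V}_i^x$ = preferences via which $i$ vetoes $x$; $i$ strongly vetoes $x$ if $\mathcal{V}_i^x=\{P_i:t(P_i)\ne x\}$; $SV_i$ = set of alternatives strongly vetoed by $i$. *)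

(* Defs.v *)
From mathcomp Require Import all_boot.
Set Implicit Arguments. Unset Strict Implicit. Unset Printing Implicit Defensive.

Definition is_strict_linear_order (X : finType) (r : rel X) : Prop :=
  irreflexive r /\ transitive r /\ (forall x y, x != y -> r x y || r y x).

Definition pref (X : finType) := {r : rel X | is_strict_linear_order r}.

Definition prefers (X : finType) (P : pref X) (x y : X) : bool := sval P x y.

Definition is_top (X : finType) (P : pref X) (x : X) : Prop :=
  forall y, y != x -> prefers P x y.

Definition profile (n : nat) (X : finType) := 'I_n -> pref X.

Definition rule (n : nat) (X : finType) := profile n X -> X.

Definition upd n (X : finType) (P : profile n X) (i : 'I_n) (Q : pref X)
  : profile n X := fun j => if j == i then Q else P j.

Definition onto n (X : finType) (f : rule n X) : Prop :=
  forall x, exists P, f P = x.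

Definition tops_only n (X : finType) (f : rule n X) : Prop :=
  forall P P' : profile n X,
    (forall i x, is_top (P i) x <-> is_top (P' i) x) -> f P = f P'.

Definition efficient n (X : finType) (f : rule n X) : Prop :=
  forall P : profile n X, ~ exists x, forall i, prefers (P i) x (f P).

Definition option_set n (X : finType) (f : rule n X) (i : 'I_n) (Pi : pref X)
  (x : X) : Prop :=
  exists P : profile n X, f (upd P i Pi) = x.

Definition worst_of (X : finType) (R : pref X) (S : X -> Prop) (w : X) : Prop :=
  S w /\ forall z, S z -> z != w -> prefers R z w.
Definition best_of (X : finType) (R : pref X) (S : X -> Prop) (b : X) : Prop :=
  S b /\ forall z, S z -> z != b -> prefers R b z.

Definition manipulation n (X : finType) (f : rule n X) (i : 'I_n)
  (Pi Pi' : pref X) : Prop :=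
  exists P : profile n X, prefers Pi (f (upd P i Pi')) (f (upd P i Pi)).

Definition obvious_manipulation n (X : finType) (f : rule n X) (i : 'I_n)
  (Pi Pi' : pref X) : Prop :=
  manipulation f i Pi Pi' /\
  ((exists w' w, worst_of Pi (option_set f i Pi') w' /\
                 worst_of Pi (option_set f i Pi) w /\ prefers Pi w' w)
   \/
   (exists b' b, best_of Pi (option_set f i Pi') b' /\
                 best_of Pi (option_set f i Pi) b /\ prefers Pi b' b)).

Definition NOM n (X : finType) (f : rule n X) : Prop :=
  forall i Pi Pi', ~ obvious_manipulation f i Pi Pi'.

Definition vetoes_via n (X : finType) (f : rule n X) (i : 'I_n) (Pi : pref X)
  (x : X) : Prop := ~ option_set f i Pi x.

Definition V n (X : finType) (f : rule n X) (i : 'I_n) (x : X) : Prop :=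
  exists Pi, vetoes_via f i Pi x.

Definition SV n (X : finType) (f : rule n X) (i : 'I_n) (x : X) : Prop :=
  forall Pi, vetoes_via f i Pi x <-> ~ is_top Pi x.

Definition set_eq (X : Type) (A B : X -> Prop) : Prop := forall x, A x <-> B x.
Definition nonempty (X : Type) (A : X -> Prop) : Prop := exists x, A x.

(* Main.v *)
Require Import Defs.
From mathcomp Require Import all_boot.
From mathcomp Require Import zify.
From Stdlib Require Import Classical ClassicalEpsilon FunctionalExtensionality.
Set Implicit Arguments. Unset Strict Implicit. Unset Printing Implicit Defensive.

Lemma pref_irr (X : finType) (P : pref X) x : prefers P x x = false.
Proof. rewrite /prefers; case: P => r [irr _] /=; exact: irr. Qed.

Lemma pref_asym (X : finType) (P : pref X) x y :
  prefers P x y -> prefers P y x -> False.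
Proof.
rewrite /prefers; case: P => r [irr [tr _]] /= h1 h2.
by move: (tr _ _ _ h1 h2); rewrite irr.
Qed.

Lemma pref_tot (X : finType) (P : pref X) x y :
  x != y -> prefers P x y || prefers P y x.
Proof. rewrite /prefers; case: P => r [_ [_ t]] /=; apply: t. Qed.

Lemma list_best (X : finType) (r : rel X) : is_strict_linear_order r ->
  forall s : seq X, s != [::] ->
  exists2 w, w \in s & forall z, z \in s -> z != w -> r w z.
Proof.
move=> [irr [tr tot]]; elim=> [//|y s IH] _.
case: (altP (s =P [::])) => [-> | ns].
  exists y; first by rewrite inE eqxx.
  by move=> z; rewrite inE => /eqP ->; rewrite eqxx.
have [w' w's hw'] := IH ns.
case: (altP (y =P w')) => [eyw | nyw].
  exists w'; first by rewrite inE w's orbT.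
  move=> z; rewrite inE => /orP [/eqP ->|zs]; first by rewrite eyw eqxx.
  exact: hw'.
have /orP [hyw | hwy] := tot _ _ nyw.
  exists y; first by rewrite inE eqxx.
  move=> z; rewrite inE => /orP [/eqP ->|zs]; first by rewrite eqxx.
  move=> _; case: (altP (z =P w')) => [-> //| nzw].
  exact: tr (hw' _ zs nzw).
exists w'; first by rewrite inE w's orbT.
move=> z; rewrite inE => /orP [/eqP -> _|zs]; first by [].
exact: hw'.
Qed.

Lemma set_best (X : finType) (r : rel X) : is_strict_linear_order r ->
  forall S : X -> Prop, (exists x, S x) ->
  exists b, S b /\ forall z, S z -> z != b -> r b z.
Proof.
move=> Hr S [x0 Sx0].
pose sb x := if excluded_middle_informative (S x) then true else false.
have sbP : forall x, sb x <-> S x.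
  by move=> x; rewrite /sb; case: excluded_middle_informative.
have ne : [seq x <- enum X | sb x] != [::].
  apply/eqP => e; have : x0 \in [seq x <- enum X | sb x].
    by rewrite mem_filter mem_enum andbT; apply/sbP.
  by rewrite e.
have [w ws hw] := list_best Hr ne.
exists w; split; first by move: ws; rewrite mem_filter mem_enum andbT => /sbP.
move=> z Sz; apply: hw; rewrite mem_filter mem_enum andbT; exact/sbP.
Qed.

Lemma flip_slo (X : finType) (r : rel X) : is_strict_linear_order r ->
  is_strict_linear_order (fun a b => r b a).
Proof.
move=> [irr [tr tot]]; split; first by move=> x; apply: irr.
split; first by move=> y x z h1 h2; exact: tr h2 h1.
by move=> x y nxy; rewrite orbC; apply: tot.
Qed.

Lemma slo_of (X : finType) (P : pref X) : is_strict_linear_order (sval P).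
Proof. by case: P. Qed.

Lemma best_ex (X : finType) (P : pref X) (S : X -> Prop) :
  (exists x, S x) -> exists b, best_of P S b.
Proof. move=> ne; exact: (set_best (slo_of P) ne). Qed.

Lemma worst_ex (X : finType) (P : pref X) (S : X -> Prop) :
  (exists x, S x) -> exists b, worst_of P S b.
Proof. move=> ne; exact: (set_best (flip_slo (slo_of P)) ne). Qed.

Lemma top_ex (X : finType) (P : pref X) (x0 : X) : exists b, is_top P b.
Proof.
have [b [_ hb]] := @best_ex X P (fun _ => True) (ex_intro _ x0 I).
by exists b => y ny; apply: hb.
Qed.

Lemma top_uniq (X : finType) (P : pref X) a b :
  is_top P a -> is_top P b -> a = b.
Proof.
move=> ha hb; apply/eqP; apply/negP => /negP nab.
apply: (pref_asym (ha _ _) (hb _ nab)); by rewrite eq_sym.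
Qed.

Definition mkkey (X : finType) (b x : X) (lo : bool) (y : X) : nat :=
  if y == b then 0 else if y == x then (if lo then #|X|.+2 else 1)
  else (enum_rank y).+2.

Lemma mkkey_inj (X : finType) (b x : X) lo : injective (mkkey b x lo).
Proof.
move=> y z; unfold mkkey.
have ry : enum_rank y < #|X| := ltn_ord _.
have rz : enum_rank z < #|X| := ltn_ord _.
case: (y =P b); case: (z =P b); case: (y =P x); case: (z =P x); case: lo;
  intros; subst; try lia; try done;
  by case: H => /ord_inj /enum_rank_inj.
Qed.

Lemma mk_slo (X : finType) (b x : X) lo :
  is_strict_linear_order (fun y z => mkkey b x lo y < mkkey b x lo z).
Proof.
split; first by move=> y; rewrite ltnn.
split; first by move=> y w z; apply: ltn_trans.
move=> y z nyz; rewrite -neq_ltn; apply/negP => /eqP /mkkey_inj e.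
by rewrite e eqxx in nyz.
Qed.

Definition mkpref (X : finType) (b x : X) lo : pref X :=
  exist _ _ (mk_slo b x lo).

Lemma mk_top (X : finType) (b x : X) lo : is_top (mkpref b x lo) b.
Proof.
move=> y nyb; rewrite /prefers /= /mkkey eqxx (negbTE nyb).
by case: (y == x); case: lo.
Qed.

Lemma mk_second (X : finType) (b x : X) y :
  x != b -> y != b -> y != x -> prefers (mkpref b x false) x y.
Proof.
move=> xb yb yx; rewrite /prefers /= /mkkey (negbTE xb) eqxx (negbTE yb).
by rewrite (negbTE yx).
Qed.

Lemma mk_bottom (X : finType) (b x : X) y :
  x != b -> y != x -> prefers (mkpref b x true) y x.
Proof.
move=> xb yx; rewrite /prefers /= /mkkey (negbTE xb) eqxx.
have ry : enum_rank y < #|X| := ltn_ord _.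
case: (y == b) => //; rewrite (negbTE yx); lia.
Qed.

Lemma other (X : finType) : 2 <= #|X| -> forall x : X, exists b, b != x.
Proof.
move=> h2 x; case: (pickP [pred b | b != x]) => [b hb|h]; first by exists b.
have e : #|X| = #|pred1 x|.
  apply: eq_card => y; rewrite !inE; move: (h y) => /= /negbFE /eqP ->.
  by rewrite eqxx.
by move: h2; rewrite e card1.
Qed.

Lemma unanim n (X : finType) (f : rule n X) i (Q : pref X) a :
  efficient f -> is_top Q a -> option_set f i Q a.
Proof.
move=> ef ta; exists (fun _ => Q).
apply/eqP; apply/negP => /negP ne; apply: (ef (upd (fun _ => Q) i Q)).
exists a => j; have -> : upd (fun _ => Q) i Q j = Q by rewrite /upd; case: (j == i).
exact: ta.
Qed.

Lemma SV_V n (X : finType) (f : rule n X) i x :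
  2 <= #|X| -> SV f i x -> V f i x.
Proof.
move=> h2 hs; have [b nb] := other h2 x.
exists (mkpref b x false); apply/hs => tx.
have e := top_uniq tx (@mk_top _ b x false); by rewrite e eqxx in nb.
Qed.

Lemma SV_NOM n (X : finType) (f : rule n X) :
  efficient f -> (forall i, set_eq (SV f i) (V f i)) -> NOM f.
Proof.
move=> ef hs i Pi Pi' [_ [[w' [w [[Ow' hw'] [[Ow hw] pw]]]] | [b' [b [[Ob' hb'] [[Ob hb] pb]]]]]].
- have [a ta] := top_ex Pi w.
  have Oa := unanim i ef ta.
  have nOw : ~ option_set f i Pi' w.
    move=> Ow2; have nww : w != w'.
      by apply/eqP => e; rewrite e pref_irr in pw.
    exact: pref_asym pw (hw' _ Ow2 nww).
  case: (altP (w =P a)) => [ewa | nwa].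
    rewrite ewa in pw; have nwa : w' != a.
      by apply/eqP => e; rewrite e pref_irr in pw.
    exact: pref_asym pw (ta _ nwa).
  have Vw : V f i w by exists Pi'.
  have /(hs i w) hsw := Vw.
  apply: ((hsw Pi).2 _ Ow) => tw.
  by move: nwa; rewrite (top_uniq tw ta) eqxx.
- have [a ta] := top_ex Pi b.
  have Oa := unanim i ef ta.
  have eba : b = a.
    apply/eqP; apply/negP => /negP nba.
    have := hb _ Oa; rewrite eq_sym => /(_ nba) h.
    exact: pref_asym h (ta _ nba).
  rewrite eba in pb; have nba : b' != a.
    by apply/eqP => e; rewrite e pref_irr in pb.
  exact: pref_asym pb (ta _ nba).
Qed.

Lemma NOM_SV n (X : finType) (f : rule n X) :
  2 <= #|X| -> efficient f -> tops_only f -> NOM f ->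
  forall i, set_eq (SV f i) (V f i).
Proof.
move=> h2 ef to nom i x; split; first exact: SV_V.
move=> [Q hQ] Pi; split.
  by move=> hv tx; apply: hv; apply: unanim.
move=> nt [P hP].
have [b tb] := top_ex Pi x.
have nbx : x != b by apply/eqP => e; apply: nt; rewrite e.
pose R := mkpref b x true.
have fR : f (upd P i R) = x.
  rewrite -hP; apply: to => j y; rewrite /upd; case: (j == i) => //.
  split => h.
    by rewrite (top_uniq h (@mk_top _ b x true)).
  by rewrite (top_uniq h tb); apply: mk_top.
have nQ : forall y, option_set f i Q y -> y != x.
  by move=> y Oy; apply/eqP => e; apply: hQ; rewrite -e.
apply: (nom i R Q); split.
  exists P; rewrite fR; apply: mk_bottom => //; apply: nQ; by exists P.
left.
have [w' [Ow' hw']] := @worst_ex X R (option_set f i Q) (ex_intro _ _ (ex_intro _ P erefl)).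
exists w', x; split; first by split.
split; last by apply: mk_bottom => //; apply: nQ.
split; first by exists P.
by move=> z _ nzx; apply: mk_bottom.
Qed.

Lemma struct n (X : finType) (f : rule n X) :
  efficient f -> (forall i, set_eq (SV f i) (V f i)) ->
  forall i j x z, i != j -> V f i x -> V f j z -> x = z.
Proof.
move=> ef hs i j x z ij Vx Vz.
apply/eqP; apply/negP => /negP nxz.
have /(hs i x) Sx := Vx; have /(hs j z) Sz := Vz.
pose Pz := mkpref z x false; pose Px := mkpref x z false.
pose P := fun k => if k == j then Px else Pz.
have ePi : upd P i Pz = P.
  apply: functional_extensionality => k; rewrite /upd /P.
  by case: (k =P i) => // ->; rewrite (negbTE ij).
have ePj : upd P j Px = P.
  apply: functional_extensionality => k; rewrite /upd /P.
  by case: (k =P j).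
have c1 : f P != x.
  apply/eqP => e; apply: ((Sx Pz).2 _); last by exists P; rewrite ePi.
  move=> tx; move: nxz; by rewrite (top_uniq tx (@mk_top _ z x false)) eqxx.
have c2 : f P != z.
  apply/eqP => e; apply: ((Sz Px).2 _); last by exists P; rewrite ePj.
  move=> tz; move: nxz; by rewrite (top_uniq tz (@mk_top _ x z false)) eqxx.
apply: (ef P); exists x => k; rewrite /P; case: (k == j).
  by apply: mk_top.
apply: mk_second => //; by rewrite eq_sym.
Qed.

Theorem corollary1 (n : nat) (X : finType) (f : rule n X) :
  2 <= n -> 2 <= #|X| ->
  onto f -> efficient f -> tops_only f ->
  (NOM f <->
   ((forall i j : 'I_n, nonempty (V f i) -> nonempty (V f j) -> i = j) /\
    (forall i : 'I_n, nonempty (V f i) -> set_eq (SV f i) (V f i))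
   \/
   (exists y : X, forall i : 'I_n,
       set_eq (SV f i) (V f i) /\ (forall x, V f i x -> x = y)))).
Proof.
move=> hn h2 _ ef to; split.
  move=> nom; have hs := NOM_SV h2 ef to nom.
  have st := struct ef hs.
  case: (classic (exists i j : 'I_n, i != j /\ nonempty (V f i) /\ nonempty (V f j))).
    move=> [i [j [ij [[y Vy] [z Vz]]]]]; right; exists y => k; split => // x Vx.
    case: (altP (k =P i)) => [ki|ki].
      rewrite ki in Vx; by rewrite (st _ _ _ _ ij Vx Vz) (st _ _ _ _ ij Vy Vz).
    by apply: (st _ _ _ _ ki Vx Vy).
  move=> nex; left; split => // i j ni nj.
  apply/eqP; apply/negP => /negP ij; apply: nex; by exists i, j.
move=> H; apply: SV_NOM => // i x; split; first exact: SV_V.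
case: H => [[_ H] | [y H]] Vx; last exact: (((H i).1 x).2 Vx).
exact: ((H i (ex_intro _ x Vx) x).2 Vx).
Qed.
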